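(* Let $n,m,k,t\ge 1$ and $r\ge 0$ be integers with $m=\lceil k/t\rceil + r$ and $n\ge tm$. Then the minimum total storage of an ${\sf ECBC}(n,m,k,t,r)$ is $$N(n,m,k,t,r)=m\bigl(n-t(m-r-1)\bigr)=tm(r+1)+m(n-tm).$$
   Context: An Erasure Combinatorial Batch Code ${\sf ECBC}(n,m,k,t,r)$ is a family of $m$ subsets $S_1,\dots,S_m$ (the contents of $m$ servers) of the file set $X=\{1,\dots,n\}$ such that for every subset $X'\subseteq X$ with $|X'|\le k$ and every subset $J\subseteq\{1,\dots,m\}$ with $|J|\ge m-r$, there exist subsets $C_j\subseteq S_j$ ($j\in J$) with $|C_j|\le t$ and $X'=\bigcup_{j\in J}C_j$. Its total storage is $N=\sum_{i=1}^m|S_i|$, and $N(n,m,k,t,r)$ denotes the minimum total storage over all ${\sf ECBC}(n,m,k,t,r)$. *)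

(* Defs.v *)
(* Files X = {1..n} are modelled by 'I_n, servers by 'I_m. *)
From mathcomp Require Import all_boot.
Set Implicit Arguments. Unset Strict Implicit. Unset Printing Implicit Defensive.

Definition is_ECBC (n m k t r : nat) (S : 'I_m -> {set 'I_n}) : Prop :=
  forall (X' : {set 'I_n}) (J : {set 'I_m}),
    #|X'| <= k -> m - r <= #|J| ->
    exists C : 'I_m -> {set 'I_n},
      (forall j, j \in J -> C j \subset S j /\ #|C j| <= t) /\
      X' = \bigcup_(j in J) C j.

Definition storage (n m : nat) (S : 'I_m -> {set 'I_n}) : nat :=
  \sum_(i < m) #|S i|.

Definition is_min_storage (n m k t r N : nat) : Prop :=
  (exists S : 'I_m -> {set 'I_n}, is_ECBC k t r S /\ storage S = N) /\
  (forall S : 'I_m -> {set 'I_n}, is_ECBC k t r S -> N <= storage S).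

Definition ceil_div (a b : nat) : nat := (a + b.-1) %/ b.

(* Main.v *)
Require Import Defs.
From mathcomp Require Import all_boot ssralg zmodp zify.
Import GRing.Theory.

Definition nbh {L R : finType} (adj : L -> {set R}) (S : {set L}) : {set R} := \bigcup_(x in S) adj x.

Lemma nbhD {L R : finType} (adj : L -> {set R}) (N0 : {set R}) S :
  nbh (fun x => adj x :\: N0) S = nbh adj S :\: N0.
Proof.
apply/setP => y; rewrite inE; apply/bigcupP/andP.
  by case=> x xS; rewrite inE => /andP [h1 h2]; split => //; apply/bigcupP; exists x.
by case=> h1 /bigcupP [x xS h2]; exists x => //; rewrite inE h1.
Qed.

Lemma hall_gen (L R : finType) (r0 : R) N : forall (adj : L -> {set R}) (A : {set L}), #|A| <= N ->
  (forall S : {set L}, S \subset A -> #|S| <= #|nbh adj S|) ->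
  exists f : L -> R, (forall x, x \in A -> f x \in adj x) /\ {in A &, injective f}.
Proof.
elim: N => [|N IH] adj A hA hH.
  have A0 : A = set0 by apply: cards0_eq; apply/eqP; rewrite -leqn0.
  by exists (fun _ => r0); subst A; split => [x|x y]; rewrite inE.
case: (leqP #|A| N) => hAN; first exact: IH.
case: (boolP [exists S : {set L}, [&& S \proper A, S != set0 & #|nbh adj S| <= #|S|]]).
- case/existsP => S0 /and3P [pS0 nS0 cS0].
  have sS0 := proper_sub pS0.
  have [f1 [f1a f1i]] := IH adj S0 (leq_trans (proper_card pS0) hA)
     (fun (S : {set L}) sS => hH S (subset_trans sS sS0)).
  set N0 := nbh adj S0 in cS0.
  have cD : #|A :\: S0| <= N.
    rewrite cardsDS //; move: nS0; rewrite -card_gt0; lia.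
  have hD : forall S : {set L}, S \subset A :\: S0 ->
      #|S| <= #|nbh (fun x => adj x :\: N0) S|.
    move=> S sS; rewrite nbhD.
    have sSA : S \subset A by apply: subset_trans sS (subsetDl _ _).
    have hU := hH (S :|: S0) (introT subUsetP (conj sSA sS0)).
    have dS : S :&: S0 = set0.
      apply/setP => x; rewrite !inE; apply/andP => -[xS xS0].
      by move/subsetP: sS => /(_ x xS); rewrite inE xS0.
    move: hU; rewrite cardsU dS cards0 /nbh bigcup_setU -/(nbh adj S) -/(nbh adj S0) -/N0.
    rewrite cardsU cardsD.
    have := subset_leq_card (subsetIl (nbh adj S) N0).
    lia.
  have [f2 [f2a f2i]] := IH (fun x => adj x :\: N0) (A :\: S0) cD hD.
  exists (fun x => if x \in S0 then f1 x else f2 x); split.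
  + move=> x xA; case: ifP => xS0; first exact: f1a.
    have : x \in A :\: S0 by rewrite inE xS0.
    by move/f2a; rewrite inE => /andP [].
  + move=> x y xA yA /=.
    have memN0 : forall z, z \in S0 -> f1 z \in N0.
      by move=> z zS; apply/bigcupP; exists z => //; apply: f1a.
    have nmem : forall z, z \in A -> z \notin S0 -> f2 z \notin N0.
      move=> z zA zS; have : z \in A :\: S0 by rewrite inE zS zA.
      by move/f2a; rewrite inE => /andP [].
    have inD : forall z, z \in A -> z \notin S0 -> z \in A :\: S0.
      by move=> z zA zS; rewrite inE zS zA.
    case: ifP => xS; case: ifP => yS.
    * exact: f1i.
    * by move=> e; have := nmem y yA (negbT yS); rewrite -e memN0.
    * by move=> e; have := nmem x xA (negbT xS); rewrite e memN0.
    * by apply: f2i; [apply: inD xA _ | apply: inD yA _]; rewrite ?xS ?yS.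
- rewrite negb_exists => /forallP hno.
  have : A != set0 by rewrite -card_gt0; lia.
  case/set0Pn => a aA.
  have : adj a != set0.
    have := hH [set a]; rewrite sub1set aA /nbh big_set1 cards1 card_gt0.
    by move/(_ isT).
  case/set0Pn => y ya.
  have cD : #|A :\ a| <= N by move: hAN hA; rewrite (cardsD1 a A) aA; lia.
  have hD : forall S : {set L}, S \subset A :\ a ->
      #|S| <= #|nbh (fun x => adj x :\ y) S|.
    move=> S sS; rewrite nbhD.
    case: (eqVneq S set0) => [->|nS]; first by rewrite cards0.
    have pS : S \proper A.
      apply/properP; split; first by apply: subset_trans sS (subsetDl _ _).
      exists a => //; apply/negP => /(subsetP sS); by rewrite !inE eqxx.
    have := hno S; rewrite pS nS /= -ltnNge => h.
    rewrite (cardsD1 y (nbh adj S)) in h.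
    move: h; case: (y \in nbh adj S) => /=; lia.
  have [f2 [f2a f2i]] := IH (fun x => adj x :\ y) (A :\ a) cD hD.
  have inD : forall z, z \in A -> z != a -> z \in A :\ a.
    by move=> z zA za; rewrite !inE za zA.
  have nmem : forall z, z \in A -> z != a -> f2 z != y.
    by move=> z zA za; have := f2a z (inD z zA za); rewrite !inE => /andP [].
  exists (fun x => if x == a then y else f2 x); split.
  + move=> x xA; case: eqP => [->//|/eqP xa].
    by have := f2a x (inD x xA xa); rewrite !inE => /andP [].
  + move=> x z xA zA /=.
    case: eqP => [->|/eqP xa]; case: eqP => [->//|/eqP za].
    * by move=> e; have := nmem z zA za; rewrite e eqxx.
    * by move=> e; have := nmem x xA xa; rewrite e eqxx.
    * by apply: f2i; apply: inD.
Qed.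

Lemma Zp1_mulrn_val p (z : 'I_p.+1) : (Zp1 *+ val z)%R = z.
Proof. apply: val_inj; rewrite Zp_mulrn /=. case: p z => [|p] z /=. by case: z => [[]]. by rewrite mul1n modn_small. Qed.

Lemma circle p (W : {set 'I_p.+1}) r : #|W| < p.+1 ->
  [set g : 'I_p.+1 | [forall d : 'I_p.+1, (d <= r) ==> ((g + d)%R \in W)]] != set0 ->
  #|[set g : 'I_p.+1 | [forall d : 'I_p.+1, (d <= r) ==> ((g + d)%R \in W)]]| + r <= #|W|.
Proof.
set G := [set g | _] => hW nG.
pose A i := [set x : 'I_p.+1 | [exists g in G, [exists d : 'I_p.+1, (d <= i) && (x == g + d)%R]]].
have AW : forall i, i <= r -> A i \subset W.
  move=> i ir; apply/subsetP => x; rewrite inE => /existsP [g /andP [gG /existsP [d /andP [di /eqP ->]]]].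
  by move: gG; rewrite inE => /forallP /(_ d); rewrite (leq_trans di ir).
have GA : G \subset A 0.
  apply/subsetP => g gG; rewrite inE; apply/existsP; exists g; rewrite gG /=.
  by apply/existsP; exists 0%R; rewrite addr0 eqxx.
have Amono : forall i j, i <= j -> A i \subset A j.
  move=> i j ij; apply/subsetP => x; rewrite !inE => /existsP [g /andP [gG /existsP [d /andP [di xe]]]].
  apply/existsP; exists g; rewrite gG /=; apply/existsP; exists d; rewrite xe andbT.
  exact: leq_trans di ij.
have step : forall i, i < r -> #|A i| < #|A i.+1|.
  move=> i ir; apply: proper_card; apply/properP; split; first exact: Amono.
  have [x xA xn] : exists2 x, x \in A i & (x + Zp1)%R \notin A i.
    case: (boolP [exists x in A i, (x + Zp1)%R \notin A i]) => [/exists_inP //| /exists_inPn hcl].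
    exfalso.
    have [a aA] : exists a, a \in A i.
      case/set0Pn: nG => g gG; exists g; exact: (subsetP (Amono 0 i isT)) _ (subsetP GA _ gG).
    have hk : forall k, (a + Zp1 *+ k)%R \in A i.
      elim=> [|k IHk]; first by rewrite mulr0n addr0.
      have := hcl _ IHk; rewrite negbK.
      by rewrite mulrSr addrA.
    have AT : A i = setT.
      apply/setP => y; rewrite in_setT; move: (hk (val (y - a)%R)).
      by rewrite Zp1_mulrn_val addrC subrK.
    have := subset_leq_card (AW i (ltnW ir)); rewrite AT cardsT card_ord; by move=> h; move: hW; rewrite ltnS leqNgt h.
  exists (x + Zp1)%R => //.
  move: xA; rewrite !inE => /existsP [g /andP [gG /existsP [d /andP [di /eqP xe]]]].
  apply/existsP; exists g; rewrite gG /=; apply/existsP; exists (d + Zp1)%R.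
  rewrite xe addrA eqxx andbT.
  have : val (d + Zp1)%R = (d + (1 %% p.+1)) %% p.+1 by [].
  move=> ->; apply: leq_trans (leq_mod _ _) _; have := leq_mod 1 p.+1; lia.
have main : forall i, i <= r -> #|G| + i <= #|A i|.
  elim=> [|i IHi] ir; first by rewrite addn0 subset_leq_card.
  have := IHi (ltnW ir); have := step i ir; lia.
exact: leq_trans (main r (leqnn r)) (subset_leq_card (AW r (leqnn r))).
Qed.

Lemma divmod_enc (a : nat) {c t : nat} : c < t -> (a * t + c) %/ t = a /\ (a * t + c) %% t = c.
Proof.
move=> ct; have tp : 0 < t by apply: leq_ltn_trans ct.
by rewrite divnMDl // divn_small // addn0 modnMDl modn_small.
Qed.

Lemma enc_lt (n m t : nat) (g : 'I_m) (c : 'I_t) : t * m <= n -> g * t + c < n.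
Proof. move=> h; have := ltn_ord g; have := ltn_ord c; nia. Qed.

Definition enc n m t (h : t * m <= n) (gc : 'I_m * 'I_t) : 'I_n :=
  Ordinal (@enc_lt n m t gc.1 gc.2 h).

Lemma card_blocks n p t (h : t * p.+1 <= n) (tpos : 0 < t) (P : pred 'I_p.+1) :
  #|[set x : 'I_n | (x < t * p.+1) && P (inord (x %/ t))]| = #|[set g | P g]| * t.
Proof.
have -> : [set x : 'I_n | (x < t * p.+1) && P (inord (x %/ t))] =
          (@enc n p.+1 t h) @: setX [set g | P g] [set: 'I_t].
  apply/setP => x; rewrite inE; apply/andP/imsetP.
  - case=> xl Px; exists (inord (x %/ t), Ordinal (ltn_pmod x tpos)).
      by rewrite !inE Px.
    apply: val_inj => /=; rewrite inordK; first by rewrite [LHS](divn_eq x t).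
    by rewrite ltn_divLR // mulnC.
  - case=> [[g c]]; rewrite !inE /= => /andP [Pg _] ->.
    have [e1 _] := divmod_enc g (ltn_ord c).
    have ge : inord ((g * t + c) %/ t) = g :> 'I_p.+1.
      by apply: val_inj => /=; rewrite e1 inordK.
    split; last by rewrite ge.
    by have := ltn_ord g; have := ltn_ord c; rewrite /=; nia.
rewrite card_in_imset; first by rewrite cardsX cardsT card_ord.
move=> [a1 a2] [b1 b2] _ _ /(congr1 val) /= e.
have [ea1 ea2] := divmod_enc a1 (ltn_ord a2).
have [eb1 eb2] := divmod_enc b1 (ltn_ord b2).
have e1 : nat_of_ord a1 = nat_of_ord b1 by rewrite -ea1 -eb1 e.
have e2 : nat_of_ord a2 = nat_of_ord b2 by rewrite -ea2 -eb2 e.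
by rewrite (val_inj e1) (val_inj e2).
Qed.

Lemma card_ord_lt N K : K <= N -> #|[set d : 'I_N | d < K]| = K.
Proof.
move=> h.
have -> : [set d : 'I_N | d < K] = (widen_ord h) @: [set: 'I_K].
  apply/setP => d; rewrite inE; apply/idP/imsetP.
  - by move=> dK; exists (Ordinal dK) => //; apply: val_inj.
  - by case=> i _ ->; rewrite /= ltn_ord.
rewrite card_imset ?cardsT ?card_ord //.
by move=> a b /(congr1 val) /= /val_inj.
Qed.

Lemma card_far p r (s : 'I_p.+1) : r <= p ->
  #|[set g : 'I_p.+1 | r < val (s - g)%R]| = p - r.
Proof.
move=> rp.
have -> : [set g : 'I_p.+1 | r < val (s - g)%R] =
          (fun d : 'I_p.+1 => s - d)%R @: [set d : 'I_p.+1 | r < d].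
  apply/setP => g; rewrite inE; apply/idP/imsetP.
  - by move=> h; exists (s - g)%R; rewrite ?inE // GRing.opprB GRing.addrC GRing.subrK.
  - by case=> d; rewrite inE => h ->; rewrite GRing.opprB GRing.addrC GRing.subrK.
rewrite card_imset; last by move=> a b /= /GRing.addrI /GRing.oppr_inj.
have := cardsC [set d : 'I_p.+1 | d < r.+1].
rewrite card_ord card_ord_lt //.
have -> : ~: [set d : 'I_p.+1 | d < r.+1] = [set d : 'I_p.+1 | r < d].
  by apply/setP => d; rewrite !inE ltnS ltnNge.
lia.
Qed.

Lemma subset_card {T : finType} {A : {set T}} {K : nat} : K <= #|A| ->
  exists B : {set T}, B \subset A /\ #|B| = K.
Proof.
case/card_geqP => s [us hs ss]; exists [set x in s]; split.
  by apply/subsetP => x; rewrite inE => /ss.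
by rewrite cardsE (card_uniqP us) hs.
Qed.

Lemma card_bigcup_le {I T : finType} (J : {set I}) (C : I -> {set T}) :
  #|\bigcup_(j in J) C j| <= \sum_(j in J) #|C j|.
Proof.
elim/big_rec2: _ => [|j U s _ h]; first by rewrite cards0.
rewrite cardsU; lia.
Qed.

Lemma lower n p t r k (S : 'I_p.+1 -> {set 'I_n}) : is_ECBC k t r S ->
  t * (p - r) < k -> r <= p -> forall i, n - t * (p - r) <= #|S i|.
Proof.
move=> hE hk rp i; rewrite leqNgt; apply/negP => hlt.
have hc : t * (p - r) + 1 <= #|~: S i| by have := cardsC (S i); rewrite card_ord; lia.
have [X [sX cX]] := subset_card hc.
have hJ0 : p - r <= #|[set: 'I_p.+1] :\ i|.
  by have := cardsD1 i [set: 'I_p.+1]; rewrite in_setT cardsT card_ord add1n => -[<-]; exact: leq_subr.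
have [J0 [sJ0 cJ0]] := subset_card hJ0.
have iJ0 : i \notin J0 by apply/negP => /(subsetP sJ0); rewrite !inE eqxx.
have hX : #|X| <= k by rewrite cX; lia.
have hJ : p.+1 - r <= #|i |: J0| by rewrite cardsU1 iJ0 cJ0; lia.
have [C [hC eX]] := hE X (i |: J0) hX hJ.
have Ci0 : #|C i| = 0.
  apply/eqP; rewrite cards_eq0; apply/eqP/setP => x; rewrite inE; apply/negP => xC.
  have [sub _] := hC i (setU11 i J0); have xS := subsetP sub x xC.
  have : x \in X by rewrite eX; apply/bigcupP; exists i => //; exact: setU11.
  by move/(subsetP sX); rewrite inE xS.
have := card_bigcup_le (i |: J0) C; rewrite -eX big_setU1 //= Ci0 add0n cX.
have : \sum_(j in J0) #|C j| <= \sum_(j in J0) t.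
  apply: leq_sum => j jJ.
  have jin : j \in i |: J0 by rewrite inE jJ orbT.
  by have [_ ->] := hC j jin.
rewrite sum_nat_const cJ0 => h1 h2; have := leq_trans h2 h1; rewrite mulnC; lia.
Qed.

Lemma upper n p t r k : 0 < t -> t * p.+1 <= n -> r <= p -> k <= t * (p.+1 - r) ->
  exists S : 'I_p.+1 -> {set 'I_n}, is_ECBC k t r S /\ (forall s, #|S s| = n - (p - r) * t).
Proof.
move=> tpos htm rp hk.
pose S (s : 'I_p.+1) := [set x : 'I_n | ~~ ((x < t * p.+1) && (r < val (s - inord (x %/ t))%R))].
exists S; split; last first.
  move=> s.
  have e : #|~: S s| = (p - r) * t.
    rewrite -(@card_far p r s rp).
    rewrite -(@card_blocks n p t htm tpos (fun g : 'I_p.+1 => r < val (s - g)%R)).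
    by apply: eq_card => x; rewrite !inE negbK.
  have := cardsC (S s); rewrite card_ord e => h.
  have le := leq_addr #|S s| ((p - r) * t); rewrite addnC h in le.
  by apply/eqP; rewrite -(eqn_add2r ((p - r) * t)) h subnK.
move=> X J hX hJ.
pose adj (x : 'I_n) := [set y : 'I_p.+1 * 'I_t | (y.1 \in J) && (x \in S y.1)].
have hall_cond : forall S' : {set 'I_n}, S' \subset X -> #|S'| <= #|nbh adj S'|.
  move=> S' sS'.
  pose T := [set j in J | [exists x in S', x \in S j]].
  have eN : nbh adj S' = setX T [set: 'I_t].
    apply/setP => -[j c]; apply/bigcupP/idP.
    - case=> x xS; rewrite !inE => /andP [yJ xSy].
      rewrite /= yJ andbT /=; apply/exists_inP; exists x => //.
      by move: xSy; rewrite !inE.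
    - rewrite in_setX in_setT andbT inE => /andP [yJ /exists_inP [x xS xSy]].
      by exists x => //; rewrite !inE in xSy; rewrite !inE /= yJ xSy.
  rewrite eN cardsX cardsT card_ord.
  case: (leqP (p.+1 - r) #|T|) => hT.
    rewrite mulnC; apply: leq_trans (leq_mul (leqnn t) hT).
    exact: leq_trans (leq_trans (subset_leq_card sS') hX) hk.
  have noU : forall x, x \in S' -> x < t * p.+1.
    move=> x xS; rewrite ltnNge; apply/negP => hx.
    have JT : J \subset T.
      apply/subsetP => j jJ; rewrite inE jJ /=; apply/exists_inP; exists x => //.
      by rewrite inE ltnNge hx.
    have := subset_leq_card JT; lia.
  pose W := T :|: ~: J.
  pose G := [set g : 'I_p.+1 | [forall d : 'I_p.+1, (d <= r) ==> ((g + d)%R \in W)]].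
  have sG : S' \subset [set x : 'I_n | (x < t * p.+1) && (fun g => g \in G) (inord (x %/ t))].
    apply/subsetP => x xS; rewrite inE noU //=.
    rewrite inE; apply/forallP => d; apply/implyP => dr.
    rewrite !inE; case jJ: ((inord (x %/ t) + d)%R \in J); last by rewrite orbT.
    apply/orP; left; apply/exists_inP; exists x => //.
    have e : ((inord (x %/ t) + d) - inord (x %/ t))%R = d :> 'I_p.+1.
      by rewrite addrC addKr.
    by rewrite inE e noU //= -leqNgt.
  have cG := subset_leq_card sG; rewrite card_blocks // in cG.
  have eG : [set g | (fun g => g \in G) g] = G by apply/setP => g; rewrite inE.
  rewrite eG in cG.
  case: (eqVneq G set0) => [G0|nG].
    by move: cG; rewrite G0 cards0 mul0n leqn0 => /eqP ->.
  have hW : #|W| <= #|T| + r.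
    rewrite cardsU; have := cardsC J; rewrite card_ord; lia.
  have := @circle p W r _ nG.
  have hWp : #|W| < p.+1 by lia.
  move=> /(_ hWp) hc.
  have : #|G| <= #|T| by rewrite -(leq_add2r r); exact: leq_trans hc hW.
  move/(leq_mul (leqnn t)); rewrite mulnC (mulnC t #|T|) => h.
  exact: leq_trans cG h.
have [f [fa fi]] := @hall_gen _ _ (ord0, Ordinal tpos) #|X| adj X (leqnn _) hall_cond.
exists (fun j => [set x in X | (f x).1 == j]); split.
- move=> j jJ; split.
  + apply/subsetP => x; rewrite inE => /andP [xX /eqP <-].
    by have := fa x xX; rewrite inE => /andP [_ ->].
  + have inj : {in [set x in X | (f x).1 == j] &, injective f}.
      by apply: sub_in2 fi => x; rewrite inE => /andP [].
    rewrite -(card_in_imset inj).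
    have : f @: [set x in X | (f x).1 == j] \subset setX [set j] [set: 'I_t].
      apply/subsetP => y /imsetP [x]; rewrite inE => /andP [_ /eqP e] ->.
      by case: (f x) e => a b /= ->; rewrite in_setX in_set1 eqxx in_setT.
    by move/subset_leq_card; rewrite cardsX cards1 cardsT card_ord mul1n.
- apply/setP => x; apply/idP/bigcupP.
  + move=> xX; exists (f x).1; first by have := fa x xX; rewrite inE => /andP [].
    by rewrite inE xX eqxx.
  + by case=> j _; rewrite inE => /andP [].
Qed.

Theorem theorem6 (n m k t r : nat) :
  1 <= n -> 1 <= m -> 1 <= k -> 1 <= t ->
  m = ceil_div k t + r -> t * m <= n ->
  is_min_storage n m k t r (m * (n - t * (m - r - 1))) /\
  m * (n - t * (m - r - 1)) = t * m * (r + 1) + m * (n - t * m).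
Proof.
move=> hn hm hk ht hq htm.
have q1 : 1 <= ceil_div k t by rewrite /ceil_div divn_gt0 //; lia.
have kq : k <= t * ceil_div k t.
  rewrite /ceil_div; have := divn_eq (k + t.-1) t; have := ltn_pmod (k + t.-1) ht; lia.
have qk : t * (ceil_div k t - 1) < k.
  rewrite mulnBr muln1 mulnC; have := leq_divM (k + t.-1) t; rewrite /ceil_div; lia.
move: (ceil_div k t) q1 kq qk hq => q q1 kq qk hq.
case: m hm hq htm => [//|p] _ hq htm.
have rp : r <= p by lia.
have epr : p.+1 - r - 1 = p - r by lia.
have eq1 : p.+1 - r = q by lia.
have eq2 : p - r = q - 1 by lia.
split; last first.
  rewrite epr.
  have e : n - t * (p - r) = t * (r + 1) + (n - t * p.+1).
    have : t * (p - r) + t * (r + 1) = t * p.+1 by rewrite -mulnDr; congr (_ * _); lia.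
    lia.
  by rewrite e mulnDr mulnA (mulnC p.+1 t).
rewrite epr; split.
- have hk' : k <= t * (p.+1 - r) by rewrite eq1.
  have [S [hE hS]] := @upper n p t r k ht htm rp hk'.
  exists S; split => //.
  rewrite /storage (eq_bigr (fun _ => n - (p - r) * t)) //.
  by rewrite sum_nat_const card_ord (mulnC (p - r) t).
- move=> S hE; rewrite /storage.
  have hk' : t * (p - r) < k by rewrite eq2.
  have hl := @lower n p t r k S hE hk' rp.
  have : \sum_(i < p.+1) (n - t * (p - r)) <= \sum_(i < p.+1) #|S i|.
    by apply: leq_sum => i _; exact: hl i.
  by rewrite sum_nat_const card_ord.
Qed.
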